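(* Let $r,q$ be positive integers with $q\ge r+1$, and let $G$ be a $2q$-path degenerate graph. Define $f(0)=1$ and, for integers $x\ge1$, \[ f(x)=\begin{cases} x+2+\log_2\!\left(\frac{q-1}{q-x}\right), & \text{if } q<2r,\\ x+2, & \text{otherwise.}\end{cases} \] Then $G$ has a good linear order with respect to $f$ up to $r$.
   Context: Graphs are finite and simple. A strict ear of a graph $G$ is a path of $G$ whose internal vertices all have degree $2$ in $G$ and whose two endpoints are distinct. For an integer $p\ge1$, a $p$-reduction of $G$ is the deletion of either an isolated vertex, or a vertex of degree $1$, or the internal vertices of a strict ear of $G$ of length at least $p$. A graph is $p$-path degenerate if it can be reduced to the empty graph by a sequence of $p$-reductions. For a linear order $\pi$ of $V(G)$, an integer $x\ge0$ and $u,v\in V(G)$, $u$ is weakly $x$-reachable from $v$ under $\pi$ if $u\le_\pi v$ and there is a $u$–$v$ path $P$ of length at most $x$ such that $u<_\pi w$ for every internal vertex $w$ of $P$. $\mathrm{WReach}_x[G,\pi,v]$ is the set of vertices weakly $x$-reachable from $v$. A linear order $\pi$ of $V(G)$ is a good linear order with respect to $f$ up to $r$ if $\max_{v\in V(G)}|\mathrm{WReach}_x[G,\pi,v]|\le f(x)$ for every integer $0\le x\le r$. *)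

(* Defs.v *)
From mathcomp Require Import all_boot.
From Stdlib Require Import Reals.

Set Implicit Arguments.
Unset Strict Implicit.
Unset Printing Implicit Defensive.

(* A finite simple graph: vertex type T : finType, adjacency e : rel T
   (assumed symmetric and irreflexive in the theorem).
   Intermediate graphs of a reduction sequence are induced subgraphs G[S]. *)

Definition deg (T : finType) (e : rel T) (S : {set T}) (v : T) : nat :=
  #|[set u in S | e v u]|.

(* x :: s is a path of G: consecutive vertices adjacent, all vertices distinct.
   Its length is size s; its endpoints are x and last x s. *)
Definition is_gpath (T : finType) (e : rel T) (x : T) (s : seq T) : bool :=
  path e x s && uniq (x :: s).

Definition internal (T : Type) (x : T) (s : seq T) : seq T :=
  behead (belast x s).

Definition strict_ear (T : finType) (e : rel T) (S : {set T}) (x : T) (s : seq T) : bool :=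
  [&& is_gpath e x s, all (fun w => w \in S) (x :: s), x != last x s
    & all (fun w => deg e S w == 2) (internal x s)].

Definition p_reduction (T : finType) (p : nat) (e : rel T) (S S' : {set T}) : Prop :=
  (exists v, [/\ v \in S, deg e S v = 0 & S' = S :\ v]) \/
  (exists v, [/\ v \in S, deg e S v = 1 & S' = S :\ v]) \/
  (exists x s, [/\ strict_ear e S x s, p <= size s
                 & S' = S :\: [set w | w \in internal x s]]).

Inductive reducible (T : finType) (p : nat) (e : rel T) : {set T} -> Prop :=
| reducible0 : reducible p e set0
| reducibleS S S' : p_reduction p e S S' -> reducible p e S' -> reducible p e S.

Definition path_degenerate (T : finType) (p : nat) (e : rel T) : Prop :=
  reducible p e [set: T].

(* linear order given by an injective rank pi : T -> nat (u <_pi v iff pi u < pi v).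
   u is weakly x-reachable from v: pi u <= pi v and there is a u-v path u :: t of
   length n <= x whose internal vertices w all satisfy pi u < pi w. *)
Definition wreachable (T : finType) (e : rel T) (pi : T -> nat) (x : nat) (v u : T) : bool :=
  (pi u <= pi v) &&
  [exists n : 'I_x.+1, exists t : (nat_of_ord n).-tuple T,
     [&& is_gpath e u t, last u t == v & all (fun w => pi u < pi w) (internal u t)]].

Definition WReach (T : finType) (e : rel T) (pi : T -> nat) (x : nat) (v : T) : {set T} :=
  [set u | wreachable e pi x v u].

Definition good_linear_order (T : finType) (e : rel T) (pi : T -> nat)
    (f : nat -> R) (r : nat) : Prop :=
  injective pi /\
  forall x : nat, x <= r -> forall v : T, (INR #|WReach e pi x v| <= f x)%R.

Definition log2 (y : R) : R := (ln y / ln 2)%R.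

Definition f_bound (q r : nat) (x : nat) : R :=
  if x == 0 then 1%R
  else if q < 2 * r then (INR x + 2 + log2 (INR (q - 1) / INR (q - x)))%R
  else (INR x + 2)%R.

(* Main.v *)
Require Import Defs.
From mathcomp Require Import all_boot.
From Stdlib Require Import Reals.
From mathcomp Require Import zify.
From Stdlib Require Import Lia Lra.
Set Implicit Arguments.
Unset Strict Implicit.
Unset Printing Implicit Defensive.

Definition kk (q y : nat) := trunc_log 2 (q.-1 %/ (q - y)).
Definition gg q y := if y == 0 then 1 else y + 2 + kk q y.

Lemma kk_mono q y1 y2 : y1 <= y2 -> y2 < q -> kk q y1 <= kk q y2.
Proof.
move=> H12 H2; apply: leq_trunc_log; apply: leq_div2l; lia.
Qed.

Lemma kk_strict q x i : 0 < i < x -> x < q -> q - x <= i -> kk q (x - i) < kk q x.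
Proof.
move=> Hi Hx Hqi; rewrite /kk.
set d1 := q.-1 %/ (q - (x - i)).
set d := q.-1 %/ (q - x).
have Hd1 : 0 < d1 by rewrite divn_gt0; lia.
have H1 := trunc_logP (isT : 1 < 2) Hd1.
have H2 : d1 <= d %/ 2.
  rewrite /d -divnMA; apply: leq_div2l; lia.
have H3 : 2 * (d %/ 2) <= d by rewrite mulnC leq_trunc_div.
apply: trunc_log_max => //; rewrite expnS.
apply: leq_trans H3; rewrite leq_mul2l /=; exact: leq_trans H1 H2.
Qed.

Lemma gg_pos q x : 1 <= gg q x.
Proof. rewrite /gg; case: eqP => _ //; lia. Qed.

Lemma gg_S q x : 0 < x -> x.+2 <= gg q x.
Proof. rewrite /gg; case: eqP => H; lia. Qed.

Lemma gg_step q x : 0 < x -> x < q -> (gg q x.-1).+1 <= gg q x.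
Proof.
case: x => [|x] // _ Hq; rewrite /gg /=; case: eqP => H.
- subst; lia.
- have := @kk_mono q x x.+1 (leqnSn x) Hq; lia.
Qed.

Lemma gg_ear q c x i : 0 < i -> x < q -> q <= c ->
  (minn x i.-1).+1 + (if i <= x then gg q (x - i) else 0) +
  (if (i < c) && (c - i <= x) then 1 else 0) <= gg q x.
Proof.
move=> Hi Hx Hc.
case: (posnP x) => [Hx0|Hx0].
  subst x; rewrite (leqNgt i 0) Hi /=.
  have -> : (i < c) && (c - i <= 0) = false by lia.
  rewrite /gg /=; lia.
have Hgx := @gg_S q x Hx0.
case: (leqP i x) => Hix.
- have -> : minn x i.-1 = i.-1 by lia.
  have -> : i < c by lia.
  case: (eqVneq i x) => Hie.
  + subst i; rewrite subnn; have -> : gg q 0 = 1 by []. rewrite /=; case: (c - x <= x); lia.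
  + have Hxi : 0 < x - i by lia.
    rewrite /gg; have -> : (x - i == 0) = false by lia.
    have -> : (x == 0) = false by lia.
    case: (leqP (c - i) x) => Hci /=.
    * have := @kk_strict q x i ltac:(lia) Hx ltac:(lia); lia.
    * have := @kk_mono q (x - i) x (leq_subr _ _) Hx; lia.
- have -> : minn x i.-1 = x by lia.
  case: (_ && _); lia.
Qed.
Lemma INR_expn2 K : INR (expn 2 K) = (2 ^ K)%R.
Proof.
elim: K => [|K IH]; first by rewrite expn0.
by rewrite expnS mult_INR IH /=.
Qed.

Lemma kk_real q x : (0 < x)%N -> (x < q)%N ->
  (INR (kk q x) <= log2 (INR (q - 1) / INR (q - x)))%R.
Proof.
move=> Hx Hq.
set d := q.-1 %/ (q - x).
have Hd : (0 < d)%N by rewrite divn_gt0; lia.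
have H1 := trunc_logP (isT : (1 < 2)%N) Hd.
have H2 : (d * (q - x) <= q.-1)%N by rewrite leq_trunc_div.
rewrite -/d -/(kk q x) in H1.
set K := kk q x in H1 *.
have HB : (0 < INR (q - x))%R by apply: lt_0_INR; apply/ltP; lia.
have H1r : (2 ^ K <= INR d)%R.
  have := le_INR _ _ (elimT leP H1); rewrite INR_expn2; lra.
have H2r : (INR d * INR (q - x) <= INR (q - 1))%R.
  rewrite -mult_INR; apply: le_INR; apply/leP; rewrite subn1; exact: H2.
have Hy : (2 ^ K <= INR (q - 1) / INR (q - x))%R.
  apply (Rmult_le_reg_r (INR (q - x))) => //.
  have -> : (INR (q - 1) / INR (q - x) * INR (q - x) = INR (q - 1))%R by field; lra.
  apply: Rle_trans H2r; apply Rmult_le_compat_r; lra.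
have Hpow : (0 < 2 ^ K)%R by apply pow_lt; lra.
have Hln : (ln (2 ^ K) <= ln (INR (q - 1) / INR (q - x)))%R.
  case: (Rle_lt_or_eq_dec _ _ Hy) => H.
  - apply: Rlt_le; exact: ln_increasing.
  - rewrite H; apply: Rle_refl.
rewrite ln_pow in Hln; last lra.
have Hl2 : (0 < ln 2)%R by have := ln_lt_2; lra.
rewrite /log2; apply (Rmult_le_reg_r (ln 2)) => //.
have -> : (ln (INR (q - 1) / INR (q - x)) / ln 2 * ln 2 = ln (INR (q - 1) / INR (q - x)))%R by field; lra.
exact: Hln.
Qed.

Lemma gg_f q r x : (0 < q)%N -> (r < q)%N -> (x <= r)%N -> (INR (gg q x) <= f_bound q r x)%R.
Proof.
move=> Hq Hr Hx; rewrite /gg /f_bound; case: eqP => Hx0.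
  by rewrite /=; apply: Rle_refl.
have Hx1 : (0 < x)%N by lia.
case: ifP => Hqr.
- rewrite !plus_INR; have := kk_real Hx1 (leq_ltn_trans Hx Hr).
  have -> : INR 2 = 2%R by []. lra.
- have -> : kk q x = 0%N.
    apply/eqP; rewrite /kk trunc_log_eq0 /=.
    rewrite -ltnS ltn_divLR; lia.
  rewrite addn0 plus_INR; have -> : INR 2 = 2%R by []. lra.
Qed.

Section Main.
Variable T : finType.
Variable e : rel T.
Hypothesis esym : symmetric e.
Hypothesis eirr : irreflexive e.

Lemma nth_belast_lt (u y : T) t k : k < size t -> nth u (belast y t) k = nth u (y :: t) k.
Proof.
elim: t y k => [|z t IH] y k //= Hk.
case: k Hk => [|k] //= Hk; exact: IH.
Qed.

Lemma internal_mem (u : T) t w :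
  w \in internal u t <-> exists2 k, 0 < k < size t & w = nth u (u :: t) k.
Proof.
case: t => [|y t] /=; first by split => // [[k /andP[? ?]]].
rewrite /internal /=; split.
- move/(nthP u) => [k]; rewrite size_belast => Hk <-.
  by exists k.+1 => //; rewrite nth_belast_lt.
- move=> [[|k] //]; rewrite ltnS => /andP[_ Hk] ->.
  apply/(nthP u); exists k; rewrite ?size_belast //.
  by rewrite nth_belast_lt.
Qed.


Definition wpath (S : {set T}) (y : nat -> T) n :=
  [/\ forall k, k < n -> e (y k) (y k.+1),
      forall k1 k2, k1 <= n -> k2 <= n -> y k1 = y k2 -> k1 = k2 &
      forall k, k <= n -> y k \in S].

Definition wr (S : {set T}) (pi : T -> nat) x v u :=
  pi u <= pi v /\ exists n y, [/\ n <= x, wpath S y n, y 0 = u, y n = v &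
     forall k, 0 < k < n -> pi u < pi (y k)].

Definition wrb (S : {set T}) (pi : T -> nat) x v u : bool :=
  (pi u <= pi v) &&
  [exists n : 'I_x.+1, exists t : (nat_of_ord n).-tuple T,
     [&& is_gpath e u t, all (fun w => w \in S) (u :: t), last u t == v
       & all (fun w => pi u < pi w) (internal u t)]].

Lemma wrb_wr S pi x v u : wrb S pi x v u -> wr S pi x v u.
Proof.
case/andP=> Hle /existsP[n /existsP[t /and4P[/andP[Hp Hu] HS /eqP Hl Hi]]].
split => //; exists (size t), (nth u (u :: t)); split => //.
- by rewrite size_tuple -ltnS.
- split.
  + by move=> k Hk; move/(pathP u): Hp => /(_ k Hk).
  + move=> k1 k2 H1 H2; move/(uniqP u): Hu; apply; by rewrite inE /= ltnS.
  + move=> k Hk; move/allP: HS; apply; apply: mem_nth; by rewrite /= ltnS.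
- by rewrite -(last_nth u).
- move=> k Hk; move/allP: Hi; apply; apply/internal_mem; by exists k.
Qed.

Lemma wr_wrb S pi x v u : wr S pi x v u -> wrb S pi x v u.
Proof.
case=> Hle [n [y [Hn [Ha Hinj HS] Hy0 Hyn Hint]]].
set t := mkseq (fun k => y k.+1) n.
have Hst : size t == n by rewrite size_mkseq.
have Hnth : forall k, k <= n -> nth u (u :: t) k = y k.
  case=> [|k] Hk /=; first by rewrite Hy0.
  by rewrite nth_mkseq.
have Hn' : n < x.+1 by rewrite ltnS.
apply/andP; split => //; apply/existsP; exists (Ordinal Hn').
apply/existsP; exists (Tuple Hst).
rewrite [tval _]/=.
apply/and4P; split.
- apply/andP; split.
  + apply/(pathP u) => k; rewrite size_mkseq => Hk.
    have H1 := Hnth k.+1 Hk.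
    have H2 := Hnth k (ltnW Hk).
    change (nth u (u :: t) k.+1) with (nth u t k) in H1.
    by rewrite H1 H2 Ha.
  + apply/(uniqP u) => k1 k2; rewrite !inE /= size_mkseq !ltnS => H1 H2.
    rewrite (Hnth k1 H1) (Hnth k2 H2); exact: Hinj.
- apply/allP => w /(nthP u) [k]; rewrite /= size_mkseq ltnS => Hk <-.
  by rewrite (Hnth k Hk) HS.
- by rewrite (last_nth u) size_mkseq (Hnth n (leqnn n)) Hyn.
- apply/allP => w /internal_mem [k]; rewrite size_mkseq => /andP[H0 Hk] ->.
  rewrite (Hnth k (ltnW Hk)); apply: Hint; by rewrite H0.
Qed.

Lemma WReach_wrb pi x v : WReach e pi x v = [set u | wrb [set: T] pi x v u].
Proof.
apply/setP => u; rewrite !inE /wreachable /wrb; congr (_ && _).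
apply: eq_existsb => n; apply: eq_existsb => t.
have -> : all (fun w => w \in [set: T]) (u :: t) = true.
  by apply/allP => w _; rewrite in_setT.
by [].
Qed.

Lemma deg2_nb (S : {set T}) w z1 z2 z : deg e S w = 2 -> z1 \in S -> z2 \in S ->
  e w z1 -> e w z2 -> z1 != z2 -> z \in S -> e w z -> z = z1 \/ z = z2.
Proof.
move=> Hd H1 H2 E1 E2 Hne Hz Ez.
have Hsub : [set z1; z2] \subset [set u in S | e w u].
  by apply/subsetP => t; rewrite !inE => /orP[] /eqP ->; rewrite ?H1 ?E1 ?H2 ?E2.
have Heq : [set z1; z2] == [set u in S | e w u].
  by rewrite eqEcard Hsub cards2 Hne; move: Hd; rewrite /deg => ->.
have : z \in [set u in S | e w u] by rewrite inE Hz Ez.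
by rewrite -(eqP Heq) !inE => /orP[] /eqP ->; [left|right].
Qed.

Lemma deg_ge2 (S : {set T}) w z1 z2 : z1 \in S -> z2 \in S ->
  e w z1 -> e w z2 -> z1 != z2 -> 2 <= deg e S w.
Proof.
move=> H1 H2 E1 E2 Hne.
have <- : #|[set z1; z2]| = 2 by rewrite cards2 Hne.
apply: subset_leq_card; apply/subsetP => t.
by rewrite !inE => /orP[] /eqP ->; rewrite ?H1 ?E1 ?H2 ?E2.
Qed.

Lemma wpath_rev (S : {set T}) y n : wpath S y n -> wpath S (fun k => y (n - k)) n.
Proof.
case=> Ha Hi HS; split.
- move=> k Hk; rewrite esym subnS.
  have -> : n - k = (n - k).-1.+1 by rewrite prednK // subn_gt0.
  rewrite -pred_Sn; apply: Ha; by rewrite prednK ?subn_gt0 // leq_subr.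
- move=> k1 k2 H1 H2 Heq; have := Hi _ _ (leq_subr k1 n) (leq_subr k2 n) Heq.
  by move=> Heq'; rewrite -(subKn H1) -(subKn H2) Heq'.
- move=> k _; apply: HS; exact: leq_subr.
Qed.

Lemma wpath_prefix (S : {set T}) y n m : wpath S y n -> m <= n -> wpath S y m.
Proof.
case=> Ha Hi HS Hm; split.
- move=> k Hk; apply: Ha; exact: leq_trans Hk Hm.
- move=> k1 k2 H1 H2; apply: Hi; exact: leq_trans Hm.
- move=> k Hk; apply: HS; exact: leq_trans Hm.
Qed.

Lemma wpath_shift (S : {set T}) y n m : wpath S y n -> m <= n -> wpath S (fun k => y (m + k)) (n - m).
Proof.
case=> Ha Hi HS Hm; split.
- move=> k Hk; rewrite addnS; apply: Ha; by rewrite -ltn_subRL.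
- move=> k1 k2 H1 H2 Heq.
  have := Hi _ _ _ _ Heq; rewrite -!leq_subRL // => /(_ H1 H2) /eqP.
  by rewrite eqn_add2l => /eqP.
- move=> k Hk; apply: HS; by rewrite -leq_subRL.
Qed.

Lemma escape_del (S : {set T}) v n y : deg e S v <= 1 -> wpath S y n ->
  y 0 != v -> y n != v -> forall k, k <= n -> y k \in S :\ v.
Proof.
move=> Hd [Ha Hi HS] H0 Hn k Hk; rewrite in_setD1 HS // andbT.
case: k Hk => [|k] Hk; first by [].
case: (ltnP k.+1 n) => Hkn; last first.
  by have -> : k.+1 = n by apply/eqP; rewrite eqn_leq Hk Hkn.
apply/eqP => Hv.
have : 2 <= deg e S v.
  apply: (@deg_ge2 _ _ (y k) (y k.+2)).
  - by apply: HS; rewrite ltnW.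
  - by apply: HS.
  - by rewrite -Hv esym; apply: Ha; rewrite ltnW.
  - by rewrite -Hv; apply: Ha.
  - apply/eqP => Heq; have := Hi _ _ (ltnW Hk) Hkn Heq.
    lia.
by rewrite leqNgt ltnS Hd.
Qed.

Lemma old_wr (S S' : {set T}) (pi pi' : T -> nat) B' x L w u :
  (forall z, z \in S' -> pi z = pi' z) -> (forall z, z \in S' -> pi' z < B') ->
  (forall z, z \in S -> z \notin S' -> B' <= pi z) ->
  (forall n y, n < L -> wpath S y n -> y 0 \in S' -> y n \in S' ->
      forall k, k <= n -> y k \in S') ->
  x < L -> w \in S' -> wr S pi x w u -> wr S' pi' x w u.
Proof.
move=> Hpi HB HB' Hesc HxL Hw [Hle [n [y [Hn Hp H0 Hyn Hint]]]].
have HuS : u \in S by rewrite -H0; case: Hp => _ _; apply.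
have Hu : u \in S'.
  apply/negPn/negP => Hu.
  have := HB' u HuS Hu; rewrite leqNgt; move/negP; apply.
  by apply: leq_ltn_trans Hle _; rewrite Hpi // HB.
have Hall := Hesc n y (leq_ltn_trans Hn HxL) Hp (etrans (congr1 _ H0) Hu)
   (etrans (congr1 (fun z => z \in S') Hyn) Hw).
split; first by rewrite -Hpi // -Hpi.
exists n, y; split => //.
- by case: Hp => Ha Hi _; split.
- move=> k Hk; rewrite -!Hpi //; first by apply: Hint.
  by apply: Hall; case/andP: Hk => _ /ltnW.
Qed.


Lemma walk (S : {set T}) y n (p : nat -> T) M k j :
  wpath S y n ->
  (forall j z, 0 < j <= M -> z \in S -> e (p j) z -> z = p j.-1 \/ z = p j.+1) ->
  y k = p j -> y k.+1 = p j.+1 ->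
  forall t, k + t <= n -> j + t <= M.+1 -> y (k + t) = p (j + t).
Proof.
move=> [Ha Hi HS] Hnb H0 H1.
have Hs : forall t, k + t.+1 <= n -> j + t.+1 <= M.+1 ->
   y (k + t) = p (j + t) /\ y (k + t.+1) = p (j + t.+1).
  elim=> [|t IH] Hk Hj; first by rewrite !addn0 !addn1.
  have [E0 E1] : y (k + t) = p (j + t) /\ y (k + t.+1) = p (j + t.+1) by apply: IH; lia.
  split => //.
  have Hz : y (k + t.+2) \in S by apply: HS.
  have Hez : e (p (j + t.+1)) (y (k + t.+2)).
    by rewrite -E1 (addnS k t.+1); apply: Ha; lia.
  have Hj' : 0 < j + t.+1 <= M by lia.
  case: (Hnb _ _ Hj' Hz Hez) => Hc.
  - exfalso; have Hc' : y (k + t.+2) = y (k + t) by rewrite Hc E0; congr p; lia.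
    have Hkk : k + t <= n by lia.
    have := Hi _ _ Hk Hkk Hc'; lia.
  - by rewrite Hc !addnS.
case=> [|t] Hk Hj; first by rewrite !addn0.
by have [_ ->] := Hs t Hk Hj.
Qed.

Definition earH (S S' : {set T}) (p : nat -> T) M :=
 [/\ forall j1 j2, j1 <= M.+1 -> j2 <= M.+1 -> p j1 = p j2 -> j1 = j2,
     forall j, j <= M.+1 -> p j \in S,
     forall j z, 0 < j <= M -> z \in S -> e (p j) z -> z = p j.-1 \/ z = p j.+1,
     forall j, 0 < j <= M -> p j \notin S' &
     forall w, w \in S -> w \notin S' -> exists2 j, 0 < j <= M & w = p j].

Lemma earH_rev S S' p M : earH S S' p M -> earH S S' (fun j => p (M.+1 - j)) M.
Proof.
case=> Hi HS Hnb Hn Hx; split.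
- move=> j1 j2 H1 H2 /Hi; rewrite !leq_subr => /(_ isT isT); lia.
- move=> j _; apply: HS; exact: leq_subr.
- move=> j z Hj Hz Hez.
  have Hj' : 0 < M.+1 - j <= M by lia.
  case: (Hnb _ _ Hj' Hz Hez) => ->; [right|left]; congr p; lia.
- move=> j Hj; apply: Hn; lia.
- move=> w Hw Hw'; have [j Hj ->] := Hx w Hw Hw'.
  exists (M.+1 - j); first lia.
  congr p; lia.
Qed.

Lemma earH_end0 S S' p M : earH S S' p M -> p 0 \in S'.
Proof.
case=> Hi HS _ _ Hx; apply/negPn/negP => H.
have [j Hj Hp] := Hx _ (HS 0 isT) H.
have Hj1 : j <= M.+1 by lia.
have := Hi 0 j (leq0n _) Hj1 Hp; lia.
Qed.

Lemma escape_core S S' p M n y k j : earH S S' p M -> wpath S y n -> n <= M ->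
  y 0 \in S' -> y n \in S' -> 0 < k < n -> 0 < j <= M ->
  y k = p j -> y k.+1 = p j.+1 -> False.
Proof.
move=> HE Hp HnM Hy0 Hyn Hk Hj E0 E1.
have HE' := HE; case: HE' => Hi HS Hnb Hn Hx.
have Hp' := Hp; case: Hp' => Ha Hiy HSy.
have Hw := walk Hp Hnb E0 E1.
have Hf : M.+1 <= j + (n - k).
  rewrite leqNgt; apply/negP => Hlt.
  have := Hw (n - k); rewrite subnKC; last by lia.
  move=> /(_ (leqnn n) (ltnW Hlt)) Hyn'.
  by move: Hyn; rewrite Hyn' (negbTE (Hn _ _)) //; lia.
have Hkm1 : y k.-1 = p j.-1.
  have Hz : y k.-1 \in S by apply: HSy; lia.
  have Hez : e (p j) (y k.-1) by rewrite -E0 esym; have := Ha k.-1; rewrite prednK; [apply; lia|lia].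
  case: (Hnb _ _ Hj Hz Hez) => // Hc.
  exfalso; move: Hc; rewrite -E1 => Hc; have := Hiy _ _ _ _ Hc; lia.
have HE2 := earH_rev HE; case: HE2 => _ _ Hnb2 Hn2 _.
have Hp2 := wpath_rev Hp.
have F0 : (fun t => y (n - t)) (n - k) = (fun i => p (M.+1 - i)) (M.+1 - j).
  by rewrite /= !subKn //; lia.
have F1 : (fun t => y (n - t)) (n - k).+1 = (fun i => p (M.+1 - i)) (M.+1 - j).+1.
  rewrite /=; have -> : n - (n - k).+1 = k.-1 by lia.
  by rewrite Hkm1; congr p; lia.
have Hw2 := walk Hp2 Hnb2 F0 F1.
have Hg : j <= k.
  rewrite leqNgt; apply/negP => Hlt.
  have := Hw2 k; rewrite subnK; last by lia.
  move=> /(_ (leqnn n)); rewrite subnn.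
  have -> : M.+1 - j + k <= M.+1 by lia.
  move=> /(_ isT) Hy0'.
  by move: Hy0; rewrite Hy0' (negbTE (Hn2 _ _)) //; lia.
lia.
Qed.

Lemma escape_ear S S' p M n y : earH S S' p M -> wpath S y n -> n <= M ->
  y 0 \in S' -> y n \in S' -> forall k, k <= n -> y k \in S'.
Proof.
move=> HE Hp HnM Hy0 Hyn k Hk.
case: k Hk => [|k] Hk; first by [].
case: (ltnP k.+1 n) => Hkn; last by have -> : k.+1 = n by lia.
apply/negPn/negP => Hnot.
have HE' := HE; case: HE' => Hi HS Hnb Hn Hx.
have Hp' := Hp; case: Hp' => Ha Hiy HSy.
have [j Hj Hyj] := Hx _ (HSy _ Hk) Hnot.
have Hz : y k.+2 \in S by apply: HSy.
have Hez : e (p j) (y k.+2) by rewrite -Hyj; apply: Ha.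
have Hk' : 0 < k.+1 < n by rewrite Hkn.
case: (Hnb _ _ Hj Hz Hez) => Hc.
- have HE2 := earH_rev HE.
  apply: (escape_core HE2 Hp HnM Hy0 Hyn Hk' (j := M.+1 - j)).
  + lia.
  + by rewrite Hyj; congr p; lia.
  + by rewrite Hc; congr p; lia.
- exact: (escape_core HE Hp HnM Hy0 Hyn Hk' Hj Hyj Hc).
Qed.


Lemma wr_refl (S : {set T}) pi x a : a \in S -> wr S pi x a a.
Proof.
move=> Ha; split => //; exists 0, (fun _ => a); split => //.
- split.
  + by move=> k; rewrite ltn0.
  + by move=> k1 k2; rewrite !leqn0 => /eqP -> /eqP ->.
  + by move=> k _.
- move=> k; lia.
Qed.

Lemma ear_new (S S' : {set T}) (pi pi' : T -> nat) B' p M c q x i u :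
  earH S S' p M ->
  (forall z, z \in S' -> pi z = pi' z) ->
  (forall z, z \in S' -> pi' z < B') ->
  (forall z, z \in S -> z \notin S' -> B' <= pi z) ->
  (forall j, 0 < j <= M -> j != c -> pi (p c) < pi (p j)) ->
  (forall j1 j2, 0 < j1 -> j1 < j2 -> j2 < c -> pi (p j1) < pi (p j2)) ->
  q <= c -> q <= M.+1 - c -> x < q -> 0 < i <= c ->
  wr S pi x (p i) u ->
  (exists2 t, (t <= x) && (t < i) & u = p (i - t)) \/
  (i <= x /\ wr S' pi' (x - i) (p 0) u) \/
  ((i < c) && (c - i <= x) /\ u = p c).
Proof.
move=> HE Hpi HB HB' R1 R2 Hqc HqM Hxq Hi [Hle [n [y [Hn Hp Hy0 Hyn Hint]]]].
have HE' := HE; case: HE' => Hinj HSp Hnb Hnot Hx.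
case: n Hn Hp Hyn Hint => [|n] Hn Hp Hyn Hint.
  by left; exists 0; [rewrite leq0n; lia | rewrite subn0 -Hyn -Hy0].
have Hp2 := wpath_rev Hp.
have Z0 : (fun t => y (n.+1 - t)) 0 = p i by rewrite /= subn0.
have Hp' := Hp; case: Hp' => Ha Hiy HSy.
have Hz : y n \in S by apply: HSy.
have Hez : e (p i) (y n) by rewrite -Hyn esym; apply: Ha.
have Hi' : 0 < i <= M by lia.
have Hu : u = (fun t => y (n.+1 - t)) n.+1 by rewrite /= subnn.
case: (Hnb _ _ Hi' Hz Hez) => Hc.
-
  have HE2 := earH_rev HE; case: HE2 => _ _ Hnb2 _ _.
  have F0 : (fun t => y (n.+1 - t)) 0 = (fun j => p (M.+1 - j)) (M.+1 - i).
    by rewrite /= subn0 subKn //; lia.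
  have F1 : (fun t => y (n.+1 - t)) 1 = (fun j => p (M.+1 - j)) (M.+1 - i).+1.
    by rewrite /= subn1 /= Hc; congr p; lia.
  have Hw := walk Hp2 Hnb2 F0 F1.
  case: (ltnP n.+1 i) => Hni.
  + left; exists n.+1; first lia.
    rewrite Hu; have := Hw n.+1; rewrite add0n => -> //; last lia.
    congr p; lia.
  + right; left; split; first lia.
    have Ha0 : y (n.+1 - i) = p 0.
      by have := Hw i; rewrite add0n => -> //; [congr p; lia | lia].
    have Hp0 : p 0 \in S' := earH_end0 HE.
    case: (eqVneq i n.+1) => Hin.
    * have Hu0 : u = p 0 by rewrite -Hy0 -Ha0 Hin subnn.
      by rewrite Hu0; apply: wr_refl.
    * have Hlt : pi u < pi (p 0) by rewrite -Ha0; apply: Hint; lia.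
      have HuS' : u \in S'.
        apply/negPn/negP => Hun.
        have HuS : u \in S by rewrite -Hy0; apply: HSy.
        have := HB' u HuS Hun.
        rewrite leqNgt; move/negP; apply; apply: ltn_trans Hlt _.
        by rewrite Hpi // HB.
      have Hpre := wpath_prefix Hp (leq_subr i n.+1).
      have HnM : n.+1 - i <= M by lia.
      have Hy0' : y 0 \in S' by rewrite Hy0.
      have Hyn' : y (n.+1 - i) \in S' by rewrite Ha0.
      have Hall := escape_ear HE Hpre HnM Hy0' Hyn'.
      split; first by rewrite -(Hpi u HuS') -(Hpi _ Hp0); exact: ltnW Hlt.
      exists (n.+1 - i), y; split => //.
      -- lia.
      -- case: Hpre => Ha3 Hi3 _; split => //.
      -- move=> k Hk; rewrite -(Hpi u HuS') -(Hpi (y k)); first (apply: Hint; lia).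
         apply: Hall; lia.
-
  have F1 : (fun t => y (n.+1 - t)) 1 = p i.+1 by rewrite /= subn1 /= Hc.
  have Hw := walk Hp2 Hnb Z0 F1.
  have HuP : u = p (i + n.+1).
    rewrite Hu; have := Hw n.+1; rewrite add0n; apply; lia.
  have HuM : 0 < i + n.+1 <= M by lia.
  case: (ltngtP (i + n.+1) c) => Hic.
  + exfalso; have := R2 i (i + n.+1) (proj1 (andP Hi)) ltac:(lia) Hic.
    by rewrite -HuP ltnNge Hle.
  + exfalso; case: (eqVneq i c) => Hic'.
    * have := R1 _ HuM ltac:(lia); rewrite -HuP -Hic' ltnNge Hle //.
    * have Hk := Hw (c - i); rewrite add0n subnKC in Hk; last lia.
      have Hyc : y (n.+1 - (c - i)) = p c by apply: Hk; lia.
      have := Hint (n.+1 - (c - i)) ltac:(lia); rewrite Hyc => H1.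
      have := R1 _ HuM ltac:(lia); rewrite -HuP => H2.
      lia.
  + right; right; split; last by rewrite HuP Hic.
    apply/andP; split; lia.
Qed.

Definition good_on (q r : nat) (S : {set T}) := exists pi : T -> nat, exists B : nat,
 [/\ {in S &, injective pi}, (forall w, w \in S -> pi w < B) &
     forall v x, v \in S -> x <= r -> #|[set u | wrb S pi x v u]| <= gg q x].

Lemma card_wr_sub (S : {set T}) pi x v (Z : {set T}) :
  (forall u, wr S pi x v u -> u \in Z) -> #|[set u | wrb S pi x v u]| <= #|Z|.
Proof.
move=> H; apply: subset_leq_card; apply/subsetP => u; rewrite inE => /wrb_wr; exact: H.
Qed.

Lemma wr0 (S : {set T}) pi v u : wr S pi 0 v u -> u = v.
Proof. by case=> _ [n [y [Hn _ H0 Hn' _]]]; move: Hn; rewrite leqn0 => /eqP Hn; subst n; rewrite -H0 Hn'. Qed.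

Lemma wr_last (S : {set T}) pi x v u : wr S pi x v u -> u = v \/ exists2 z, z \in S /\ e v z &
   wr S pi x.-1 z u.
Proof.
case=> Hle [n [y [Hn Hp H0 Hn' Hint]]].
case: n Hn Hp Hn' Hint => [|n] Hn Hp Hn' Hint; first by left; rewrite -H0 Hn'.
right; exists (y n).
  case: Hp => Ha _ HS; split; first by apply: HS.
  by rewrite -Hn' esym; apply: Ha.
split.
  case: (posnP n) => [Hn0|Hn0]; first by rewrite -H0 Hn0.
  by apply: ltnW; apply: Hint; lia.
exists n, y; split => //.
- lia.
- exact: wpath_prefix Hp (leqnSn n).
- move=> k Hk; apply: Hint; lia.
Qed.

Lemma del_good q r (S : {set T}) v : 0 < q -> r < q -> v \in S -> deg e S v <= 1 ->
  good_on q r (S :\ v) -> good_on q r S.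
Proof.
move=> Hq Hr HvS Hd [pi' [B' [Hinj' HB' Hc']]].
pose pi := fun w => if w == v then B' else pi' w.
have Hpi : forall z, z \in S :\ v -> pi z = pi' z.
  by move=> z; rewrite in_setD1 /pi => /andP[/negbTE -> _].
have HB'' : forall z, z \in S -> z \notin S :\ v -> B' <= pi z.
  by move=> z Hz; rewrite in_setD1 Hz andbT negbK /pi => ->.
have Hold : forall w x u, w \in S :\ v -> wr S pi x w u -> wr (S :\ v) pi' x w u.
  move=> w x u Hw; apply: (old_wr (L := x.+1) Hpi HB' HB'') => //.
  move=> n y _ Hp Hy0 Hyn; apply: (escape_del Hd Hp).
  - by move: Hy0; rewrite in_setD1 => /andP[].
  - by move: Hyn; rewrite in_setD1 => /andP[].
exists pi, B'.+1; split.
- move=> w1 w2 H1 H2; rewrite /pi.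
  case: (eqVneq w1 v) => E1; case: (eqVneq w2 v) => E2.
  + by rewrite E1 E2.
  + move=> Heq; have : pi' w2 < B' by apply: HB'; rewrite in_setD1 E2.
    by rewrite -Heq ltnn.
  + move=> Heq; have : pi' w1 < B' by apply: HB'; rewrite in_setD1 E1.
    by rewrite Heq ltnn.
  + apply: Hinj'; by rewrite in_setD1 ?E1 ?E2.
- move=> w Hw; rewrite /pi; case: eqP => E //.
  by apply: ltn_trans (HB' w _) _; rewrite // in_setD1 Hw andbT; apply/eqP.
- move=> w x Hw Hx.
  case: (eqVneq w v) => Ew; last first.
    have Hw' : w \in S :\ v by rewrite in_setD1 Ew.
    apply: leq_trans (Hc' w x Hw' Hx).
    apply: card_wr_sub => u /(Hold _ _ _ Hw') H; rewrite inE; exact: wr_wrb.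
  subst w.
  case: (posnP x) => [Hx0|Hx0].
    subst x; apply: leq_trans (card_wr_sub (Z := [set v]) _) _.
      by move=> u /wr0 ->; rewrite inE.
    by rewrite cards1.
  move: Hd; rewrite leq_eqVlt ltnS leqn0 => /orP[Hd1|Hd0].
  + move: Hd1; rewrite /deg => /cards1P [a Ha].
    have HaN : a \in [set u in S | e v u] by rewrite Ha inE.
    move: HaN; rewrite inE => /andP[HaS Hva].
    have Hav : a != v by apply/eqP => E; move: Hva; rewrite E eirr.
    have Ha' : a \in S :\ v by rewrite in_setD1 Hav.
    apply: leq_trans (card_wr_sub (Z := v |: [set u | wrb (S :\ v) pi' x.-1 a u]) _) _.
      move=> u /wr_last [->|[z [Hz Hez] Hwz]]; first by rewrite !inE eqxx.
      have Hza : z = a.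
        have : z \in [set u in S | e v u] by rewrite inE Hz Hez.
        by rewrite Ha inE => /eqP.
      subst z; rewrite !inE; apply/orP; right; apply: wr_wrb; exact: Hold.
    rewrite cardsU1.
    have := Hc' a x.-1 Ha' (leq_trans (leq_pred x) Hx).
    have := gg_step Hx0 (leq_ltn_trans Hx Hr); case: (_ \notin _) => /=; lia.
  + apply: leq_trans (card_wr_sub (Z := [set v]) _) _; last by rewrite cards1 gg_pos.
    move=> u /wr_last [->|[z [Hz Hez] _]]; first by rewrite inE.
    move: Hd0; rewrite /deg => /eqP/cards0_eq Hd0.
    have : z \in [set u in S | e v u] by rewrite inE Hz Hez.
    by rewrite Hd0 in_set0.
Qed.


Lemma ear_card q r (S S' : {set T}) (pi pi' : T -> nat) B' p M c x i :
  earH S S' p M ->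
  (forall z, z \in S' -> pi z = pi' z) ->
  (forall z, z \in S' -> pi' z < B') ->
  (forall z, z \in S -> z \notin S' -> B' <= pi z) ->
  (forall j, 0 < j <= M -> j != c -> pi (p c) < pi (p j)) ->
  (forall j1 j2, 0 < j1 -> j1 < j2 -> j2 < c -> pi (p j1) < pi (p j2)) ->
  (forall x', x' <= r -> #|[set u | wrb S' pi' x' (p 0) u]| <= gg q x') ->
  q <= c -> q <= M.+1 - c -> x <= r -> r < q -> 0 < i <= c ->
  #|[set u | wrb S pi x (p i) u]| <= gg q x.
Proof.
move=> HE Hpi HB HB' R1 R2 IH Hqc HqM Hx Hr Hi.
pose A1 := (fun t : 'I_(minn x i.-1).+1 => p (i - t)) @: [set: 'I_(minn x i.-1).+1].
pose A2 := if i <= x then [set u | wrb S' pi' (x - i) (p 0) u] else set0.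
pose A3 := if (i < c) && (c - i <= x) then [set p c] else set0.
apply: leq_trans (card_wr_sub (Z := A1 :|: A2 :|: A3) _) _.
  move=> u Hu.
  case: (ear_new HE Hpi HB HB' R1 R2 Hqc HqM (leq_ltn_trans Hx Hr) Hi Hu).
  - move=> [t Ht ->]; rewrite !inE; apply/orP; left; apply/orP; left.
    have Ht' : t < (minn x i.-1).+1 by lia.
    by apply/imsetP; exists (Ordinal Ht').
  - move=> [[Hix Hw] | [Hc ->]].
    + rewrite !inE; apply/orP; left; apply/orP; right.
      by rewrite /A2 Hix inE; apply: wr_wrb.
    + by rewrite !inE /A3 Hc inE eqxx orbT.
apply: leq_trans (leq_card_setU _ _) _.
apply: leq_trans (leq_add (leq_card_setU _ _) (leqnn _)) _.
have H1 : #|A1| <= (minn x i.-1).+1.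
  by apply: leq_trans (leq_imset_card _ _) _; rewrite cardsT card_ord.
have H2 : #|A2| <= (if i <= x then gg q (x - i) else 0).
  rewrite /A2; case: ifP => Hix; last by rewrite cards0.
  apply: IH; lia.
have H3 : #|A3| <= (if (i < c) && (c - i <= x) then 1 else 0).
  by rewrite /A3; case: ifP => _; rewrite ?cards1 ?cards0.
apply: leq_trans (gg_ear (c := c) (x := x) (i := i) _ _ Hqc); try lia.
Qed.


Lemma ear_good q r (S : {set T}) a s : 0 < q -> r < q -> strict_ear e S a s ->
  2 * q <= size s ->
  good_on q r (S :\: [set w | w \in internal a s]) -> good_on q r S.
Proof.
move=> Hq Hr Hear Hsz [pi' [B' [Hinj' HB' Hc']]].
pose S' := S :\: [set w | w \in internal a s].
case/and4P: Hear => /andP[Hpath Huniq] Hall _ Hdeg.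
pose p := fun j => nth a (a :: s) j.
pose M := (size s).-1.
have HsM : size s = M.+1 by rewrite /M prednK //; lia.
have Hint : forall w, (w \in internal a s) <-> exists2 k, 0 < k <= M & w = p k.
  move=> w; rewrite internal_mem HsM; split => [[k Hk ->]|[k Hk ->]]; exists k => //; lia.
have HpS : forall j, j <= M.+1 -> p j \in S.
  move=> j Hj; move/allP: Hall; apply; apply: mem_nth; rewrite /= HsM; lia.
have Hpinj : forall j1 j2, j1 <= M.+1 -> j2 <= M.+1 -> p j1 = p j2 -> j1 = j2.
  move=> j1 j2 H1 H2; move/(uniqP a): Huniq; apply; rewrite inE /= HsM; lia.
have Hadj : forall j, j <= M -> e (p j) (p j.+1).
  move=> j Hj; move/(pathP a): Hpath; apply; rewrite HsM; lia.
have Hnot : forall j, 0 < j <= M -> p j \notin S'.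
  move=> j Hj; rewrite /S' in_setD inE negb_and negbK; apply/orP; left.
  by apply/Hint; exists j.
have HE : earH S S' p M.
  split => //.
  - move=> j z Hj Hz Hez.
    have Hpj : p j \in internal a s by apply/Hint; exists j.
    have Hd2 : deg e S (p j) = 2 by move/allP: Hdeg => /(_ _ Hpj) /eqP.
    apply: (deg2_nb Hd2) => //.
    + apply: HpS; lia.
    + apply: HpS; lia.
    + rewrite esym; have := Hadj j.-1; rewrite prednK; [apply; lia | lia].
    + apply: Hadj; lia.
    + apply/eqP => /Hpinj; lia.
  - move=> w Hw Hw'; apply/Hint.
    by move: Hw'; rewrite /S' in_setD Hw andbT negbK inE.
pose c := q.
have HcM : c <= M by lia.
pose rk := fun j => if j < c then j.*2 else if j == c then 0 else (M.+1 - j).*2.+1.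
pose pi := fun w => if w \in S' then pi' w else B' + rk (index w (a :: s)).
have Hpip : forall j, 0 < j <= M -> pi (p j) = B' + rk j.
  move=> j Hj; rewrite /pi (negbTE (Hnot j Hj)) index_uniq //; rewrite /= HsM; lia.
have Hpi : forall z, z \in S' -> pi z = pi' z by move=> z Hz; rewrite /pi Hz.
have HB'' : forall z, z \in S -> z \notin S' -> B' <= pi z.
  by move=> z _ Hz; rewrite /pi (negbTE Hz) leq_addr.
have Hrk_inj : forall j1 j2, 0 < j1 <= M -> 0 < j2 <= M -> rk j1 = rk j2 -> j1 = j2.
  move=> j1 j2 H1 H2; rewrite /rk.
  case: (ltnP j1 c) => ?; case: (ltnP j2 c) => ?;
  case: (eqVneq j1 c) => ?; case: (eqVneq j2 c) => ?; lia.
have Hc0 : 0 < c <= M by lia.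
have R1 : forall j, 0 < j <= M -> j != c -> pi (p c) < pi (p j).
  move=> j Hj Hjc; rewrite !Hpip // ltn_add2l /rk ltnn eqxx.
  case: (ltnP j c) => ?; rewrite ?(negbTE Hjc); lia.
have R2 : forall j1 j2, 0 < j1 -> j1 < j2 -> j2 < c -> pi (p j1) < pi (p j2).
  move=> j1 j2 H1 H12 H2; rewrite !Hpip; try lia.
  rewrite ltn_add2l /rk; have -> : j1 < c by lia.
  have -> : j2 < c by []; lia.
pose p' := fun j => p (M.+1 - j).
pose c' := M.+1 - c.
have HE' := earH_rev HE.
have R1' : forall j, 0 < j <= M -> j != c' -> pi (p' c') < pi (p' j).
  move=> j Hj Hjc; rewrite /p' /c' subKn; last lia.
  apply: R1; [lia | apply/eqP => E; move/eqP: Hjc; apply; rewrite /c'; lia].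
have R2' : forall j1 j2, 0 < j1 -> j1 < j2 -> j2 < c' -> pi (p' j1) < pi (p' j2).
  move=> j1 j2 H1 H12 H2; rewrite /p' !Hpip; try lia.
  rewrite ltn_add2l /rk.
  have -> : (M.+1 - j1 < c) = false by lia.
  have -> : (M.+1 - j2 < c) = false by lia.
  have -> : (M.+1 - j1 == c) = false by lia.
  have -> : (M.+1 - j2 == c) = false by lia.
  lia.
have Ha' : p 0 \in S' := earH_end0 HE.
have Hb' : p' 0 \in S' := earH_end0 HE'.
exists pi, (B' + (M.+2).*2); split.
- move=> w1 w2 H1 H2.
  case: (boolP (w1 \in S')) => E1; case: (boolP (w2 \in S')) => E2.
  + by rewrite !Hpi //; apply: Hinj'.
  + have [j2 Hj2 ->] := (match HE with And5 _ _ _ _ h => h end) w2 H2 E2.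
    rewrite Hpip // Hpi //; have := HB' w1 E1; lia.
  + have [j1 Hj1 ->] := (match HE with And5 _ _ _ _ h => h end) w1 H1 E1.
    rewrite Hpip // Hpi //; have := HB' w2 E2; lia.
  + have [j1 Hj1 ->] := (match HE with And5 _ _ _ _ h => h end) w1 H1 E1.
    have [j2 Hj2 ->] := (match HE with And5 _ _ _ _ h => h end) w2 H2 E2.
    rewrite !Hpip // => /eqP; rewrite eqn_add2l => /eqP /Hrk_inj -> //.
- move=> w Hw; case: (boolP (w \in S')) => E.
  + rewrite Hpi //; have := HB' w E; lia.
  + have [j Hj ->] := (match HE with And5 _ _ _ _ h => h end) w Hw E.
    rewrite Hpip // /rk; case: (ltnP j c) => ?; case: (eqVneq j c) => ?; lia.
- move=> v x Hv Hx; case: (boolP (v \in S')) => E.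
  + apply: leq_trans (Hc' v x E Hx).
    apply: card_wr_sub => u Hu; rewrite inE; apply: wr_wrb.
    apply: (old_wr (L := q) Hpi HB' HB'') => //; last lia.
    move=> n y Hn Hp Hy0 Hyn; apply: (escape_ear HE Hp) => //; lia.
  + have [i Hi ->] := (match HE with And5 _ _ _ _ h => h end) v Hv E.
    case: (leqP i c) => Hic.
    * apply: (@ear_card q r S S' pi pi' B' p M c x i HE Hpi HB' HB'' R1 R2); try lia.
      move=> x' Hx'; exact: (Hc' _ _ Ha' Hx').
    * have -> : p i = p' (M.+1 - i) by rewrite /p' subKn //; lia.
      apply: (@ear_card q r S S' pi pi' B' p' M c' x (M.+1 - i) HE' Hpi HB' HB'' R1' R2'); try lia.
      move=> x' Hx'; exact: (Hc' _ _ Hb' Hx').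
Qed.


Lemma red_good q r (S : {set T}) : 0 < q -> r < q -> reducible (2 * q) e S -> good_on q r S.
Proof.
move=> Hq Hr; elim=> [|S0 S1 Hred _ IH].
- exists (fun _ => 0), 1; split.
  + by move=> w; rewrite inE.
  + by [].
  + by move=> v x; rewrite inE.
- case: Hred => [[v [Hv Hd E]] | [[v [Hv Hd E]] | [a [s [Hear Hs E]]]]]; subst S1.
  + by apply: (del_good Hq Hr Hv) => //; rewrite Hd.
  + by apply: (del_good Hq Hr Hv) => //; rewrite Hd.
  + exact: (ear_good Hq Hr Hear Hs IH).
Qed.

End Main.

Theorem mainTheorem18 (T : finType) (e : rel T) (r q : nat) :
  symmetric e -> irreflexive e ->
  0 < r -> 0 < q -> r + 1 <= q ->
  path_degenerate (2 * q) e ->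
  exists pi : T -> nat, good_linear_order e pi (f_bound q r) r.
Proof.
move=> Hsym Hirr Hr0 Hq0 Hrq Hdeg.
have Hr : r < q by rewrite -addn1.
have [pi [B [Hinj _ Hc]]] := red_good Hsym Hirr Hq0 Hr Hdeg.
exists pi; split.
- move=> w1 w2; apply: Hinj; by rewrite in_setT.
- move=> x Hx v.
  have := Hc v x (in_setT v) Hx; rewrite -WReach_wrb => H.
  apply: Rle_trans (gg_f Hq0 Hr Hx).
  apply: le_INR; exact/leP.
Qed.
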